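(* Let $(B,\mathfrak{m})$ be a deformation base, $X$ a vector space and $M_1,\dots,M_k\subseteq B\widehat{\otimes}X$ $B$-submodules. The following are equivalent: (i) $B\widehat{\otimes}X=M_1\oplus\dots\oplus M_k$; (ii) each $M_i$ is pseudoclosed and quasi-flat, and $X=\pi(M_1)\oplus\dots\oplus\pi(M_k)$.
   Context: Deformation base: complete local Noetherian unital $\mathbb{C}$-algebra $B$ with maximal ideal $\mathfrak{m}$, $B/\mathfrak{m}=\mathbb{C}$. $B\widehat{\otimes}X=\varprojlim(B/\mathfrak{m}^k\otimes X)$, $\pi:B\widehat{\otimes}X\to X$ is the canonical projection (reduction mod $\mathfrak{m}$), $\mathfrak{m}X$ is the image of $\mathfrak{m}\widehat{\otimes}X$. For a subspace $Y\subseteq B\widehat{\otimes}X$: $BY=\{\sum_ib_iy_i:y_i\in Y,b_i\in\mathfrak{m}^{k_i},k_i\to\infty\}$, and $\mathfrak{m}Y$ the same with all $k_i\ge1$. A $B$-submodule $M$ is pseudoclosed if $BM\subseteq M$, and quasi-flat if $M\cap\mathfrak{m}X\subseteq\mathfrak{m}M$. *)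

(* Defs.v *)
From HB Require Import structures.
From mathcomp Require Import all_boot all_order all_algebra.
From mathcomp Require Import reals.
From mathcomp.real_closed Require Import complex.
From Stdlib Require List.
Set Implicit Arguments. Unset Strict Implicit. Unset Printing Implicit Defensive.
Import Order.TTheory GRing.Theory Num.Theory.
Local Open Scope ring_scope.

Section Defs.
Variable R : realType.
Local Notation C := (R[i]).

Section Ideals.
Variable B : comNzRingType.

Definition is_ideal (J : B -> Prop) : Prop :=
  J 0 /\ (forall x y, J x -> J y -> J (x + y)) /\ (forall a x, J x -> J (a * x)).

Definition is_maximal_ideal (J : B -> Prop) : Prop :=
  is_ideal J /\ ~ J 1 /\
  (forall K, is_ideal K -> ~ K 1 -> (forall x, J x -> K x) -> forall x, K x -> J x).

Definition noetherian : Prop :=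
  forall J : B -> Prop, is_ideal J ->
    exists (n : nat) (g : 'I_n -> B),
      forall x, J x <-> exists a : 'I_n -> B, x = \sum_(j < n) a j * g j.

Fixpoint mpow (m : B -> Prop) (k : nat) : B -> Prop :=
  match k with
  | 0 => fun _ => True
  | k'.+1 => fun x => exists (n : nat) (a b : 'I_n -> B),
      (forall j, m (a j)) /\ (forall j, mpow m k' (b j)) /\
      x = \sum_(j < n) a j * b j
  end.

(* B is m-adically complete and separated, i.e. B -> lim B/m^k is bijective *)
Definition madic_complete (m : B -> Prop) : Prop :=
  (forall x, (forall k, mpow m k x) -> x = 0) /\
  (forall u : nat -> B, (forall n, mpow m n (u n.+1 - u n)) ->
     exists x, forall n, mpow m n (x - u n)).
End Ideals.

(* (B, m) is a deformation base; rho : B -> C is the reduction map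
   B -> B/m = C (a C-algebra morphism with kernel m). *)
Definition deformation_base (B : comAlgType C) (m : B -> Prop) (rho : B -> C) : Prop :=
  is_maximal_ideal m /\
  (forall J, is_maximal_ideal J -> forall x, J x <-> m x) /\
  noetherian B /\
  madic_complete m /\
  (forall x y, rho (x + y) = rho x + rho y) /\
  (forall x y, rho (x * y) = rho x * rho y) /\
  (forall c : C, rho (c *: 1) = c) /\
  (forall x, m x <-> rho x = 0).

(* The vector space X, modelled as the free C-vector space on a basis I
   (finitely supported functions I -> C), and B (^) X = lim (B/m^k (x) X),
   modelled as the functions f : I -> B with f i in m^k for all but
   finitely many i, for every k.                                       *)
Section Hat.
Variables (B : comAlgType C) (I : Type).

Definition Xsp (x : I -> C) : Prop :=
  exists s : seq I, forall i, x i <> 0 -> List.In i s.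

Definition BhatX (m : B -> Prop) (f : I -> B) : Prop :=
  forall k, exists s : seq I, forall i, ~ mpow m k (f i) -> List.In i s.

Definition pi_red (rho : B -> C) (f : I -> B) : I -> C := fun i => rho (f i).

Definition mX (m : B -> Prop) (f : I -> B) : Prop := BhatX m f /\ forall i, m (f i).

Definition series_conv (m : B -> Prop) (b : nat -> B) (y : nat -> I -> B)
  (g : I -> B) : Prop :=
  forall k, exists N, forall N', (N <= N')%N ->
    forall i, mpow m k (g i - \sum_(n < N') b n * y n i).

Definition span_hat (m : B -> Prop) (lo : nat) (Y : (I -> B) -> Prop)
  (g : I -> B) : Prop :=
  exists (b : nat -> B) (y : nat -> I -> B) (kk : nat -> nat),
    (forall n, Y (y n)) /\
    (forall n, (lo <= kk n)%N /\ mpow m (kk n) (b n)) /\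
    (forall K, exists N, forall n, (N <= n)%N -> (K <= kk n)%N) /\
    series_conv m b y g.

Definition BY m Y := span_hat m 0 Y.
Definition mY m Y := span_hat m 1 Y.

Definition is_Bsubmodule (m : B -> Prop) (M : (I -> B) -> Prop) : Prop :=
  (forall f, M f -> BhatX m f) /\ M (fun _ => 0) /\
  (forall f g, M f -> M g -> M (fun i => f i + g i)) /\
  (forall (a : B) f, M f -> M (fun i => a * f i)).

Definition pseudoclosed m M : Prop := forall g, BY m M g -> M g.

Definition quasi_flat m M : Prop := forall g, M g -> mX m g -> mY m M g.

Definition image_pi (rho : B -> C) (M : (I -> B) -> Prop) (x : I -> C) : Prop :=
  exists f, M f /\ x = pi_red rho f.
End Hat.

Definition is_direct_sum (G : zmodType) (I : Type) (n : nat)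
  (V : (I -> G) -> Prop) (W : 'I_n -> (I -> G) -> Prop) : Prop :=
  (forall j f, W j f -> V f) /\
  (forall f, V f -> exists w : 'I_n -> I -> G,
       (forall j, W j (w j)) /\ f = (fun i => \sum_(j < n) w j i)) /\
  (forall w w' : 'I_n -> I -> G, (forall j, W j (w j) /\ W j (w' j)) ->
       (fun i => \sum_(j < n) w j i) = (fun i => \sum_(j < n) w' j i) ->
       forall j, w j = w' j).
End Defs.

(* Main.v *)
Require Import Defs.
From HB Require Import structures.
From mathcomp Require Import all_boot all_order all_algebra.
From mathcomp Require Import reals.
From mathcomp.real_closed Require Import complex.
From mathcomp Require Import ring.
From Stdlib Require Import IndefiniteDescription Classical FunctionalExtensionality.
Set Implicit Arguments. Unset Strict Implicit. Unset Printing Implicit Defensive.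
Import Order.TTheory GRing.Theory Num.Theory.
Local Open Scope ring_scope.
Section P1.
Variable R : realType.
Local Notation C := (R[i]).
Variable B : comAlgType C.
Variable m : B -> Prop.
Hypothesis mI : is_ideal m.

Lemma big_closedP (P : B -> Prop) (T : Type) (r : seq T) (Q : pred T) (F : T -> B) :
  P 0 -> (forall x y, P x -> P y -> P (x + y)) -> (forall t, P (F t)) ->
  P (\sum_(t <- r | Q t) F t).
Proof. by move=> P0 PD PF; apply: big_ind => // t _; apply: PF. Qed.

Lemma m0 : m 0. Proof. by case: mI. Qed.
Lemma mD x y : m x -> m y -> m (x + y). Proof. by case: mI => _ [H _]; apply: H. Qed.
Lemma mM a x : m x -> m (a * x). Proof. by case: mI => _ [_ H]; apply: H. Qed.

Lemma mpow0 k : mpow m k 0.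
Proof.
case: k => [//|k] /=; exists 0%N, (fun _ => 0), (fun _ => 0).
split; first by case.
split; first by case.
by rewrite big_ord0.
Qed.

Lemma mpowD k x y : mpow m k x -> mpow m k y -> mpow m k (x + y).
Proof.
case: k => [//|k] /= [n1 [a1 [b1 [Ha1 [Hb1 ->]]]]] [n2 [a2 [b2 [Ha2 [Hb2 ->]]]]].
exists (n1 + n2)%N, (fun j => match split j with inl j1 => a1 j1 | inr j2 => a2 j2 end),
  (fun j => match split j with inl j1 => b1 j1 | inr j2 => b2 j2 end).
split; first by move=> j; case: (split j).
split; first by move=> j; case: (split j).
rewrite big_split_ord /=; congr (_ + _); apply: eq_bigr => j _.
- by rewrite (unsplitK (inl _ j)).
- by rewrite (unsplitK (inr _ j)).
Qed.

Lemma mpowM k a x : mpow m k x -> mpow m k (a * x).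
Proof.
case: k => [//|k] /= [n [a1 [b1 [Ha1 [Hb1 ->]]]]].
exists n, (fun j => a * a1 j), b1; split; first by move=> j; apply: mM.
split=> //; rewrite mulr_sumr; apply: eq_bigr => j _; by rewrite mulrA.
Qed.

Lemma mpowN k x : mpow m k x -> mpow m k (- x).
Proof. by move=> H; rewrite -mulN1r; apply: mpowM. Qed.

Lemma mpowB k x y : mpow m k x -> mpow m k y -> mpow m k (x - y).
Proof. by move=> Hx Hy; apply: mpowD => //; apply: mpowN. Qed.

Lemma mpow_sum k (T : Type) (r : seq T) (Q : pred T) (F : T -> B) :
  (forall t, mpow m k (F t)) -> mpow m k (\sum_(t <- r | Q t) F t).
Proof. move=> H; apply: big_closedP => //; [exact: mpow0 | exact: mpowD]. Qed.

Lemma mpowZ k (c : C) x : mpow m k x -> mpow m k (c *: x).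
Proof. by move=> H; rewrite -[x]mul1r scalerAl; apply: mpowM. Qed.

Lemma mpowS k x : mpow m k.+1 x -> mpow m k x.
Proof.
elim: k x => [//|k IH] x /= [n [a [b [Ha [Hb ->]]]]].
by exists n, a, b; split=> //; split=> // j; apply: IH.
Qed.

Lemma mpow_le a b x : (a <= b)%N -> mpow m b x -> mpow m a x.
Proof.
move=> /subnK <-; elim: (b - a)%N x => [//|d IH] x H.
by apply: IH; apply: mpowS; rewrite -addSn.
Qed.

Lemma mpow_mul k x y : m x -> mpow m k y -> mpow m k.+1 (x * y).
Proof.
move=> Hx Hy; exists 1%N, (fun _ => x), (fun _ => y); split=> //; split=> //.
by rewrite big_ord1.
Qed.

Lemma mpow1 x : mpow m 1 x <-> m x.
Proof.
split.
- move=> [n [a [b [Ha [Hb ->]]]]]; apply: big_closedP => //; [exact: m0|exact: mD|].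
  by move=> j; rewrite mulrC; apply: mM.
- by move=> Hx; rewrite -[x]mulr1; apply: mpow_mul.
Qed.

Lemma mpow_m k x : mpow m k.+1 x -> m x.
Proof. by move=> H; apply/mpow1; apply: (@mpow_le 1 k.+1). Qed.

Lemma mpow_mulr k x y : mpow m k x -> m y -> mpow m k.+1 (x * y).
Proof. by move=> Hx Hy; rewrite mulrC; apply: mpow_mul. Qed.

End P1.

Section P2.
Variable R : realType.
Local Notation C := (R[i]).
Variable B : comAlgType C.
Variable m : B -> Prop.
Hypothesis mI : is_ideal m.

Lemma gens_exist : noetherian B -> exists (s : nat) (g : nat -> B),
  (0 < s)%N /\ (forall r, m (g r)) /\
  (forall x, m x <-> exists a : nat -> B, x = \sum_(r < s) a r * g r).
Proof.
move=> /(_ m mI) [n [gg Hgg]].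
have mgg : forall j, m (gg j).
  move=> j; apply/Hgg; exists (fun j' => if j' == j then 1 else 0).
  rewrite (bigD1 j) //= eqxx mul1r big1 ?addr0 // => j' /negbTE ->; by rewrite mul0r.
have mg : forall r, m (oapp gg 0 (insub r)).
  move=> r; case: (insub r) => [j|] /=; [exact: mgg| exact: m0].
exists n.+1, (fun r => oapp gg 0 (insub r)); split=> //; split=> //.
move=> x; split.
- move=> /Hgg [a ->]; exists (fun r => oapp a 0 (insub r)).
  rewrite big_ord_recr /= insubN ?ltnn // mulr0 addr0.
  by apply: eq_bigr => j _ /=; rewrite (valK j).
- move=> [a ->]; apply: big_closedP => //; [exact: m0| exact: mD | ].
  by move=> r; apply: (mM mI); apply: mg.
Qed.

Variables (s : nat) (g : nat -> B).
Hypothesis gm : forall r, m (g r).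
Hypothesis gspan : forall x, m x <-> exists a : nat -> B, x = \sum_(r < s) a r * g r.

Lemma mpowS_gen k x : mpow m k.+1 x <->
  exists u : nat -> B, (forall r, mpow m k (u r)) /\ x = \sum_(r < s) g r * u r.
Proof.
split.
- move=> [n [a [b [Ha [Hb ->]]]]].
  have [al Hal] := functional_choice
    (fun (j : 'I_n) (v : nat -> B) => a j = \sum_(r < s) v r * g r)
    (fun j => proj1 (gspan (a j)) (Ha j)).
  exists (fun r => \sum_(j < n) al j r * b j); split.
    move=> r; apply: mpow_sum => j; apply: (mpowM mI); exact: Hb.
  rewrite (eq_bigr (fun j => \sum_(r < s) al j r * g r * b j)); last first.
    by move=> j _; rewrite Hal mulr_suml.
  rewrite exchange_big /=; apply: eq_bigr => r _; rewrite mulr_sumr.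
  by apply: eq_bigr => j _; rewrite [al j r * g r]mulrC -mulrA.
- move=> [u [Hu ->]]; exists s, (fun r => g r), (fun r => u r); split=> //.
Qed.

End P2.

Section Fun.
Variable R : realType.
Local Notation C := (R[i]).
Variable B : comAlgType C.
Variable m : B -> Prop.
Hypothesis mI : is_ideal m.
Variable I : Type.

Lemma In_app_l (T : Type) (x : T) l1 l2 : List.In x l1 -> List.In x (l1 ++ l2).
Proof. by move=> H; apply: List.in_or_app; left. Qed.
Lemma In_app_r (T : Type) (x : T) l1 l2 : List.In x l2 -> List.In x (l1 ++ l2).
Proof. by move=> H; apply: List.in_or_app; right. Qed.

Lemma BhatX0 : BhatX m (fun _ : I => 0 : B).
Proof. by move=> k; exists [::] => i []; apply: mpow0. Qed.

Lemma BhatXD (f h : I -> B) : BhatX m f -> BhatX m h -> BhatX m (fun i => f i + h i).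
Proof.
move=> Hf Hh k; case: (Hf k) => l1 H1; case: (Hh k) => l2 H2; exists (l1 ++ l2) => i Hi.
case: (classic (mpow m k (f i))) => Hfi; last by apply: In_app_l; apply: H1.
case: (classic (mpow m k (h i))) => Hhi; last by apply: In_app_r; apply: H2.
by exfalso; apply: Hi; apply: mpowD.
Qed.

Lemma BhatXM (a : B) (f : I -> B) : BhatX m f -> BhatX m (fun i => a * f i).
Proof.
move=> Hf k; case: (Hf k) => l H; exists l => i Hi; apply: H => Hfi; apply: Hi.
exact: mpowM.
Qed.

Lemma BhatX_ext (f h : I -> B) : BhatX m f -> (forall i, f i = h i) -> BhatX m h.
Proof. by move=> Hf E; have -> : h = f by apply: functional_extensionality => i; rewrite E. Qed.

Lemma BhatXN (f : I -> B) : BhatX m f -> BhatX m (fun i => - f i).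
Proof. by move=> Hf; apply: (BhatX_ext (BhatXM (-1) Hf)) => i; rewrite mulN1r. Qed.

Lemma BhatXB (f h : I -> B) : BhatX m f -> BhatX m h -> BhatX m (fun i => f i - h i).
Proof. by move=> Hf Hh; apply: BhatXD => //; apply: BhatXN. Qed.

Lemma BhatX_sum (T : Type) (r : seq T) (Q : pred T) (F : T -> I -> B) :
  (forall t, BhatX m (F t)) -> BhatX m (fun i => \sum_(t <- r | Q t) F t i).
Proof.
move=> HF; elim: r => [|t r IH].
  by apply: (BhatX_ext BhatX0) => i; rewrite big_nil.
case Qt : (Q t).
  by apply: (BhatX_ext (BhatXD (HF t) IH)) => i; rewrite big_cons Qt.
by apply: (BhatX_ext IH) => i; rewrite big_cons Qt.
Qed.

Variable M : (I -> B) -> Prop.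
Hypothesis HM : is_Bsubmodule m M.

Lemma M_Bhat f : M f -> BhatX m f. Proof. by case: HM => H _; apply: H. Qed.
Lemma M0 : M (fun _ => 0). Proof. by case: HM => _ []. Qed.
Lemma MD f h : M f -> M h -> M (fun i => f i + h i). Proof. by case: HM => _ [_ [H _]]; apply: H. Qed.
Lemma MM a f : M f -> M (fun i => a * f i). Proof. by case: HM => _ [_ [_ H]]; apply: H. Qed.
Lemma M_ext f h : M f -> (forall i, f i = h i) -> M h.
Proof. by move=> Hf E; have -> : h = f by apply: functional_extensionality => i; rewrite E. Qed.
Lemma MN f : M f -> M (fun i => - f i).
Proof. by move=> Hf; apply: (M_ext (MM (-1) Hf)) => i; rewrite mulN1r. Qed.
Lemma MB f h : M f -> M h -> M (fun i => f i - h i).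
Proof. by move=> Hf Hh; apply: MD => //; apply: MN. Qed.
Lemma MZ (c : C) f : M f -> M (fun i => c *: f i).
Proof. by move=> Hf; apply: (M_ext (MM (c *: 1) Hf)) => i; rewrite -scalerAl mul1r. Qed.
Lemma M_sum (T : Type) (r : seq T) (Q : pred T) (F : T -> I -> B) :
  (forall t, M (F t)) -> M (fun i => \sum_(t <- r | Q t) F t i).
Proof.
move=> HF; elim: r => [|t r IH].
  by apply: (M_ext M0) => i; rewrite big_nil.
case Qt : (Q t).
  by apply: (M_ext (MD (HF t) IH)) => i; rewrite big_cons Qt.
by apply: (M_ext IH) => i; rewrite big_cons Qt.
Qed.
Lemma M_lin (T : Type) (r : seq T) (Q : pred T) (a : T -> B) (F : T -> I -> B) :
  (forall t, M (F t)) -> M (fun i => \sum_(t <- r | Q t) a t * F t i).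
Proof. by move=> HF; apply: M_sum => t; apply: MM. Qed.

End Fun.

Section P3.
Variable R : realType.
Local Notation C := (R[i]).
Variable B : comAlgType C.
Variable m : B -> Prop.
Hypothesis mI : is_ideal m.
Hypothesis sep : forall x, (forall k, mpow m k x) -> x = 0.
Variables (s : nat) (g : nat -> B).
Hypothesis gm : forall r, m (g r).
Hypothesis gspan : forall x, m x <-> exists a : nat -> B, x = \sum_(r < s) a r * g r.
Variable I : Type.

Lemma climb (P : nat -> Prop) a b : (a <= b)%N -> P a -> ~ P b ->
  exists c, (a <= c)%N /\ P c /\ ~ P c.+1.
Proof.
elim: b => [|b IH] Hab Pa nPb.
  by move: Hab; rewrite leqn0 => /eqP E; subst a.
case: (eqVneq a b.+1) => [E|NE]; first by subst a.
have Hab' : (a <= b)%N by rewrite -ltnS ltn_neqAle NE Hab.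
case: (classic (P b)) => Pb; first by exists b.
exact: IH.
Qed.

Lemma decomp_pt k x : mpow m k.+1 x -> exists u : nat -> B,
  x = \sum_(r < s) g r * u r /\ (forall r, mpow m k (u r)) /\
  (forall K r, ~ mpow m K (u r) -> ~ mpow m K.+1 x).
Proof.
move=> Hx.
case: (classic (forall K, mpow m K x)) => [Hall|Hn].
  exists (fun _ => 0); rewrite (sep Hall); split.
    by rewrite big1 // => r _; rewrite mulr0.
  split=> [r|K r]; first exact: mpow0.
  by move=> H; exfalso; apply: H; apply: mpow0.
have [K0 HK0] := not_all_ex_not _ _ Hn.
have le : (k.+1 <= K0)%N.
  case: (leqP k.+1 K0) => // lt; exfalso; apply: HK0; apply: (mpow_le (ltnW lt) Hx).
have [c [Hc [Pc nPc]]] := climb (P := fun K => mpow m K x) le Hx HK0.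
case: c Hc Pc nPc => [//|c'] Hc Pc nPc.
have [u [Hu Ex]] := proj1 (mpowS_gen mI gm gspan c' x) Pc.
exists u; split=> //; split.
  by move=> r; apply: (mpow_le _ (Hu r)).
move=> K r nu HK; apply: nu.
case: (leqP K c') => [le'|lt']; first exact: (mpow_le le' (Hu r)).
by exfalso; apply: nPc; apply: (mpow_le _ HK).
Qed.

Lemma A1 k (f : I -> B) : BhatX m f -> (forall i, mpow m k.+1 (f i)) ->
  exists h : nat -> I -> B, (forall r, BhatX m (h r)) /\ (forall r i, mpow m k (h r i)) /\
  forall i, f i = \sum_(r < s) g r * h r i.
Proof.
move=> Hf Hk.
have [U HU] := functional_choice _ (fun i => decomp_pt (Hk i)).
exists (fun r i => U i r); split; last split.
- move=> r K; case: (Hf K.+1) => l Hl; exists l => i Hi; apply: Hl.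
  by have [_ [_ H]] := HU i; apply: (H K r).
- by move=> r i; have [_ [H _]] := HU i.
- by move=> i; have [H _] := HU i.
Qed.

End P3.

Section Rho.
Variable R : realType.
Local Notation C := (R[i]).
Variable B : comAlgType C.
Variable m : B -> Prop.
Variable rho : B -> C.
Hypothesis rhoD : forall x y, rho (x + y) = rho x + rho y.
Hypothesis rhoM : forall x y, rho (x * y) = rho x * rho y.
Hypothesis rhoC : forall c : C, rho (c *: 1) = c.
Hypothesis rho_m : forall x, m x <-> rho x = 0.
Hypothesis mI : is_ideal m.

Lemma rho0 : rho 0 = 0.
Proof. by apply: (@addrI _ (rho 0)); rewrite -rhoD !addr0. Qed.
Lemma rhoN x : rho (- x) = - rho x.
Proof. by apply: (@addrI _ (rho x)); rewrite -rhoD !subrr rho0. Qed.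
Lemma rhoB x y : rho (x - y) = rho x - rho y.
Proof. by rewrite rhoD rhoN. Qed.
Lemma rho_sum (T : Type) (r : seq T) (Q : pred T) (F : T -> B) :
  rho (\sum_(t <- r | Q t) F t) = \sum_(t <- r | Q t) rho (F t).
Proof. exact: (big_morph _ rhoD rho0). Qed.
Lemma rhoZ (c : C) x : rho (c *: x) = c * rho x.
Proof. have -> : c *: x = (c *: 1) * x by rewrite -scalerAl mul1r.
by rewrite rhoM rhoC. Qed.
Lemma m_sub_rho x : m (x - rho x *: 1).
Proof. by apply/rho_m; rewrite rhoB rhoC subrr. Qed.

Lemma Xsp_pi (I : Type) (f : I -> B) : BhatX m f -> Xsp (pi_red rho f).
Proof.
move=> Hf; case: (Hf 1%N) => l Hl; exists l => i Hi; apply: Hl => H.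
by apply: Hi; rewrite /pi_red; apply/rho_m; apply/(mpow1 mI).
Qed.
End Rho.

Section Common.
Variable R : realType.
Local Notation C := (R[i]).
Variable B : comAlgType C.
Variable m : B -> Prop.
Hypothesis sep : forall x, (forall k, mpow m k x) -> x = 0.

Lemma sep_fun (I : Type) (f : I -> B) : (forall k i, mpow m k (f i)) -> f = (fun _ => 0).
Proof. by move=> H; apply: functional_extensionality => i; apply: sep => k; apply: H. Qed.

Lemma sum_trunc (F : nat -> B) s N : (s <= N)%N -> (forall n, (s <= n)%N -> F n = 0) ->
  \sum_(n < N) F n = \sum_(n < s) F n.
Proof.
move=> le HF; rewrite (big_ord_widen N F le) [RHS]big_mkcond /=.
by apply: eq_bigr => n _; case: ifP => // /negbT; rewrite -leqNgt => /HF.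
Qed.
End Common.

Section Fwd.
Variable R : realType.
Local Notation C := (R[i]).
Variable B : comAlgType C.
Variable m : B -> Prop.
Hypothesis mI : is_ideal m.
Hypothesis sep : forall x, (forall k, mpow m k x) -> x = 0.
Variables (s : nat) (g : nat -> B).
Hypothesis gm : forall r, m (g r).
Hypothesis gspan : forall x, m x <-> exists a : nat -> B, x = \sum_(r < s) a r * g r.
Variable rho : B -> C.
Hypothesis rhoD : forall x y, rho (x + y) = rho x + rho y.
Hypothesis rhoM : forall x y, rho (x * y) = rho x * rho y.
Hypothesis rhoC : forall c : C, rho (c *: 1) = c.
Hypothesis rho_m : forall x, m x <-> rho x = 0.
Variables (I : Type) (n : nat) (M : 'I_n -> (I -> B) -> Prop).
Hypothesis HM : forall j, is_Bsubmodule m (M j).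
Hypothesis DS : is_direct_sum (BhatX m) M.

Lemma DS_ex f : BhatX m f -> exists w : 'I_n -> I -> B,
  (forall j, M j (w j)) /\ f = (fun i => \sum_(j < n) w j i).
Proof. by case: DS => _ [H _]; apply: H. Qed.

Lemma DS_uniq (w w' : 'I_n -> I -> B) : (forall j, M j (w j)) -> (forall j, M j (w' j)) ->
  (forall i, \sum_(j < n) w j i = \sum_(j < n) w' j i) -> forall j, w j = w' j.
Proof.
move=> Hw Hw' E; case: DS => _ [_ H]; apply: H; first by move=> j; split.
by apply: functional_extensionality.
Qed.

Lemma stab k : forall (f : I -> B) (w : 'I_n -> I -> B), BhatX m f ->
  (forall i, mpow m k (f i)) -> (forall j, M j (w j)) ->
  (forall i, f i = \sum_(j < n) w j i) -> forall j i, mpow m k (w j i).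
Proof.
elim: k => [//|k IH] f w Hf Hk Hw Ef j i.
have [h [hB [hk hE]]] := A1 mI sep gm gspan Hf Hk.
have [W HW] := functional_choice _ (fun r => DS_ex (hB r)).
have WM : forall r j, M j (W r j) by move=> r j'; case: (HW r) => H _; apply: H.
have WE : forall r i, h r i = \sum_(j < n) W r j i.
  by move=> r i'; case: (HW r) => _ E; rewrite E.
have Wk : forall r j i, mpow m k (W r j i).
  move=> r; apply: (IH (h r) (W r)) => //; exact: WM.
have E := DS_uniq (w' := fun j i => \sum_(r < s) g r * W r j i) Hw
  (fun j => M_lin (HM j) _ _ _ (fun r : 'I_s => WM r j)).
rewrite (E _ j) //; first by apply/(mpowS_gen mI gm gspan); exists (fun r => W r j i).
move=> i'; rewrite -Ef exchange_big /= hE; apply: eq_bigr => r _.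
by rewrite WE mulr_sumr.
Qed.

Lemma fwd_pseudoclosed j0 : pseudoclosed m (M j0).
Proof.
move=> gY [b [y [kk [Hy [Hkk [Hinf Hconv]]]]]].
pose P N := fun i => \sum_(k < N) b k * y k i.
have PM : forall N, M j0 (P N) by move=> N; apply: M_lin => // k; apply: Hy.
have gB : BhatX m gY.
  move=> K; case: (Hconv K) => N HN; case: (M_Bhat (HM j0) (PM N) K) => l Hl.
  exists l => i Hi; apply: Hl => HP; apply: Hi.
  have := mpowD (HN N (leqnn N) i) HP; by rewrite subrK.
have [w [Hw Ew]] := DS_ex gB.
have w0 : forall l, l != j0 -> w l = (fun _ => 0).
  move=> l nl; apply: (sep_fun sep) => K i.
  case: (Hconv K) => N HN.
  pose w' := fun j => if j == j0 then (fun i => w j i - P N i) else w j.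
  have Hw' : forall j, M j (w' j).
    by move=> j; rewrite /w'; case: eqP => [->|_]; [apply: MB => //; apply: Hw|apply: Hw].
  have := stab (f := fun i => gY i - P N i) (w := w') _ (HN N (leqnn N)) Hw' _ l i.
  rewrite /w' (negbTE nl); apply.
    by apply: (BhatXB mI) => //; exact: (M_Bhat (HM j0) (PM N)).
  move=> i'; rewrite Ew (bigD1 j0) //= [RHS](bigD1 j0) //= eqxx.
  rewrite addrAC; congr (_ + _); apply: eq_bigr => j /negbTE nj; by rewrite nj.
apply: (M_ext (Hw j0)) => i; rewrite Ew (bigD1 j0) //= big1 ?addr0 //.
by move=> j nj; rewrite w0.
Qed.

Lemma fwd_quasi_flat j0 : quasi_flat m (M j0).
Proof.
move=> gq Hq [qB qm].
have [h [hB [_ hE]]] := A1 (k := 0) mI sep gm gspan qB (fun i => proj2 (mpow1 mI _) (qm i)).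
have [W HW] := functional_choice _ (fun r => DS_ex (hB r)).
have WM : forall r j, M j (W r j) by move=> r j'; case: (HW r) => H _; apply: H.
have WE : forall r i, h r i = \sum_(j < n) W r j i.
  by move=> r i'; case: (HW r) => _ E; rewrite E.
have Hw1 : forall j, M j ((fun j => if j == j0 then gq else (fun _ => 0)) j).
  by move=> j /=; case: eqP => [->|_] //; exact: (M0 (HM j)).
have Hsum : forall i, \sum_(j < n) (fun j => if j == j0 then gq else (fun _ => 0)) j i =
   \sum_(j < n) (fun j i => \sum_(r < s) g r * W r j i) j i.
  move=> i /=; rewrite exchange_big /= (bigD1 j0) //= eqxx big1 ?addr0.
    by rewrite hE; apply: eq_bigr => r _; rewrite WE mulr_sumr.
  by move=> j /negbTE ->.
have E := DS_uniq Hw1 (fun j => M_lin (HM j) _ _ _ (fun r : 'I_s => WM r j)) Hsum j0.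
rewrite /= eqxx in E.
exists (fun k => if (k < s)%N then g k else 0), (fun k => W k j0),
  (fun k => if (k < s)%N then 1%N else k.+1).
split; first by move=> k; apply: WM.
split.
  move=> k; case: ifP => _; split=> //; first by apply/(mpow1 mI).
  exact: mpow0.
split.
  move=> K; exists (maxn s K) => k; rewrite geq_max => /andP [sk Kk].
  by rewrite ltnNge sk /= ltnW.
move=> K; exists s => N' le i.
have HF : forall k, (s <= k)%N ->
    (fun k => (if (k < s)%N then g k else 0) * W k j0 i) k = 0.
  by move=> k sk /=; rewrite ltnNge sk /= mul0r.
rewrite (sum_trunc le HF) E /=.
have -> : \sum_(k < s) (if (k < s)%N then g k else 0) * W k j0 i =
  \sum_(k < s) g k * W k j0 i by apply: eq_bigr => k _; rewrite ltn_ord.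
by rewrite subrr; apply: mpow0.
Qed.

End Fwd.

Section Fwd2.
Variable R : realType.
Local Notation C := (R[i]).
Variable B : comAlgType C.
Variable m : B -> Prop.
Hypothesis mI : is_ideal m.
Hypothesis sep : forall x, (forall k, mpow m k x) -> x = 0.
Variables (s : nat) (g : nat -> B).
Hypothesis gm : forall r, m (g r).
Hypothesis gspan : forall x, m x <-> exists a : nat -> B, x = \sum_(r < s) a r * g r.
Variable rho : B -> C.
Hypothesis rhoD : forall x y, rho (x + y) = rho x + rho y.
Hypothesis rhoM : forall x y, rho (x * y) = rho x * rho y.
Hypothesis rhoC : forall c : C, rho (c *: 1) = c.
Hypothesis rho_m : forall x, m x <-> rho x = 0.
Variables (I : Type) (n : nat) (M : 'I_n -> (I -> B) -> Prop).
Hypothesis HM : forall j, is_Bsubmodule m (M j).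
Hypothesis DS : is_direct_sum (BhatX m) M.

Lemma fwd_X : is_direct_sum (@Xsp R I) (fun j => image_pi rho (M j)).
Proof.
split; [|split].
- move=> j x [f [Mf ->]]; apply: (Xsp_pi rho_m mI); exact: (M_Bhat (HM j) Mf).
- move=> x [l Hl].
  have fB : BhatX m (fun i => x i *: (1 : B)).
    move=> K; exists l => i Hi; apply: Hl => x0; apply: Hi; rewrite x0 scale0r.
    exact: mpow0.
  have [w [Hw Ew]] := DS_ex DS fB.
  exists (fun j => pi_red rho (w j)); split.
    by move=> j; exists (w j); split.
  apply: functional_extensionality => i.
  have := f_equal (fun f => rho (f i)) Ew; rewrite /= rhoC => ->.
  by rewrite (rho_sum rhoD).
- move=> xa xb Hab Esum j.
  have [FA HA] := functional_choice _ (fun j => proj1 (Hab j)).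
  have [FB HB] := functional_choice _ (fun j => proj2 (Hab j)).
  pose d := fun j i => FA j i - FB j i.
  have dM : forall j, M j (d j).
    by move=> j'; apply: MB => //; [case: (HA j')|case: (HB j')].
  have dB : BhatX m (fun i => \sum_(j < n) d j i).
    by apply: BhatX_sum => j'; exact: (M_Bhat (HM j') (dM j')).
  have d1 : forall i, mpow m 1 (\sum_(j < n) d j i).
    move=> i; apply/(mpow1 mI)/rho_m; rewrite (rho_sum rhoD).
    rewrite (eq_bigr (fun j => xa j i - xb j i)).
      by rewrite sumrB; have := f_equal (fun f => f i) Esum => /= ->; rewrite subrr.
    move=> j' _; rewrite /d (rhoB rhoD) .
    by case: (HA j') => _ ->; case: (HB j') => _ ->.
  have := stab mI sep gm gspan HM DS dB d1 dM (fun i => erefl) j.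
  move=> H; apply: functional_extensionality => i.
  have := proj1 (rho_m _) (proj1 (mpow1 mI _) (H i)).
  rewrite /d (rhoB rhoD); case: (HA j) => _ ->; case: (HB j) => _ ->.
  by move/eqP; rewrite subr_eq0 => /eqP.
Qed.

End Fwd2.

Section LA.
Variable R : realType.
Local Notation C := (R[i]).
Variable B : comAlgType C.
Variable I : Type.
Variables (J L : B -> Prop).
Hypothesis J0 : J 0.
Hypothesis JD : forall x y, J x -> J y -> J (x + y).
Hypothesis JZ : forall (c : C) x, J x -> J (c *: x).

Lemma JN x : J x -> J (- x). Proof. by move=> H; rewrite -scaleN1r; apply: JZ. Qed.
Lemma JB x y : J x -> J y -> J (x - y). Proof. by move=> Hx Hy; apply: JD => //; apply: JN. Qed.
Lemma Jsum (T : Type) (r : seq T) (Q : pred T) (F : T -> B) :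
  (forall t, J (F t)) -> J (\sum_(t <- r | Q t) F t).
Proof. by move=> H; apply: big_ind => // t _; apply: H. Qed.

Lemma sum_deltaC (S : finType) (s0 : S) (a : C) (F : S -> C) :
  \sum_(s : S) (if s == s0 then a else 0) * F s = a * F s0.
Proof.
rewrite (bigD1 s0) //= eqxx big1 ?addr0 // => s /negbTE ->; by rewrite mul0r.
Qed.

Lemma sum_deltaZ (S : finType) (s0 : S) (F : S -> B) :
  \sum_(s : S) (if s == s0 then 1 else 0 : C) *: F s = F s0.
Proof.
rewrite (bigD1 s0) //= eqxx scale1r big1 ?addr0 // => s /negbTE ->; by rewrite scale0r.
Qed.

Lemma LA (S : finType) (sup : seq I) : forall (gam : S -> B) (x : S -> I -> C),
  (forall s i, x s i <> 0 -> List.In i sup) -> (forall s, L (gam s)) ->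
  (forall i, J (\sum_(s : S) x s i *: gam s)) ->
  exists q (kap : 'I_q -> S -> C) (w : 'I_q -> B),
    (forall t, L (w t)) /\ (forall t i, \sum_(s : S) kap t s * x s i = 0) /\
    (forall s, J (gam s - \sum_(t < q) kap t s *: w t)).
Proof.
elim: sup => [|i0 sup IH] gam x Hsup HL HJ.
  have x0 : forall s i, x s i = 0.
    by move=> s i; case: (classic (x s i = 0)) => // /Hsup.
  exists #|S|, (fun t s => if enum_rank s == t then 1 else 0), (fun t => gam (enum_val t)).
  split; first by move=> t; apply: HL.
  split; first by move=> t i; rewrite big1 // => s _; rewrite x0 mulr0.
  move=> s.
  have -> : \sum_(t < #|S|) (if enum_rank s == t then 1 else 0 : C) *: gam (enum_val t)
      = gam s.
    rewrite (bigD1 (enum_rank s)) //= eqxx scale1r enum_rankK big1 ?addr0 //.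
    by move=> t; rewrite eq_sym => /negbTE ->; rewrite scale0r.
  by rewrite subrr.
case: (classic (exists s0, x s0 i0 <> 0)) => [[s0 p0]|Hno]; last first.
  apply: IH => // s i Hi.
  case: (Hsup s i Hi) => [E|//]; subst i0; exfalso; apply: Hno; by exists s.
have p0' : x s0 i0 != 0 by apply/eqP.
pose x' := fun s i => x s i - x s i0 / x s0 i0 * x s0 i.
have x'i0 : forall s, x' s i0 = 0.
  by move=> s; rewrite /x' -mulrA mulVf // mulr1 subrr.
have Hsup' : forall s i, x' s i <> 0 -> List.In i sup.
  move=> s i Hi.
  have ni : i <> i0 by move=> E; subst i; apply: Hi; apply: x'i0.
  have : x s i <> 0 \/ x s0 i <> 0.
    case: (classic (x s i = 0)) => H1; last by left.
    case: (classic (x s0 i = 0)) => H2; last by right.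
    by exfalso; apply: Hi; rewrite /x' H1 H2 mulr0 subrr.
  case=> [/Hsup|/Hsup] [] // E; by exfalso; apply: ni.
have HJ' : forall i, J (\sum_(s : S) x' s i *: gam s).
  move=> i.
  have -> : \sum_(s : S) x' s i *: gam s =
     \sum_(s : S) x s i *: gam s - (x s0 i / x s0 i0) *: \sum_(s : S) x s i0 *: gam s.
    rewrite /x' scaler_sumr -sumrB; apply: eq_bigr => s _.
    by rewrite scalerBl scalerA; congr (_ - _ *: _); ring.
  by apply: JB; [apply: HJ| apply: JZ; apply: HJ].
have [q [kap [w [Lw [Hk HJk]]]]] := IH gam x' Hsup' HL HJ'.
pose c := fun t => \sum_(s : S) kap t s * x s i0.
exists q, (fun t s => kap t s - (if s == s0 then c t / x s0 i0 else 0)), w.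
split=> //; split.
  move=> t i.
  have := Hk t i; rewrite /x'.
  under eq_bigr => s _ do rewrite mulrBr.
  rewrite sumrB => E.
  under eq_bigr => s _ do rewrite mulrBl.
  rewrite sumrB sum_deltaC; rewrite -[RHS]E; congr (_ - _).
  rewrite /c -mulrA mulr_suml; apply: eq_bigr => s _; by rewrite !mulrA.
move=> s.
have -> : \sum_(t < q) (kap t s - (if s == s0 then c t / x s0 i0 else 0)) *: w t =
   \sum_(t < q) kap t s *: w t - (if s == s0 then \sum_(t < q) (c t / x s0 i0) *: w t else 0).
  case: eqP => _.
    by rewrite -sumrB; apply: eq_bigr => t _; rewrite scalerBl.
  by rewrite subr0; apply: eq_bigr => t _; rewrite subr0.
rewrite opprB [X in _ + X]addrC addrA; apply: JD; first by apply: HJk.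
case: eqP => _; last done.
have -> : \sum_(t < q) (c t / x s0 i0) *: w t =
   (x s0 i0)^-1 *: \sum_(s' : S) x s' i0 *: \sum_(t < q) kap t s' *: w t.
  rewrite /c; under eq_bigr => t _ do rewrite mulrC mulr_sumr scaler_suml.
  rewrite exchange_big scaler_sumr /=; apply: eq_bigr => s' _.
  rewrite !scaler_sumr; apply: eq_bigr => t _; rewrite !scalerA; congr (_ *: _).
  by ring.
apply: JZ.
have -> : \sum_(s' : S) x s' i0 *: \sum_(t < q) kap t s' *: w t =
   \sum_(s' : S) x s' i0 *: gam s' -
   \sum_(s' : S) x s' i0 *: (gam s' - \sum_(t < q) kap t s' *: w t).
  by rewrite -sumrB; apply: eq_bigr => s' _; rewrite scalerBr opprB addrC subrK.
apply: JB; first exact: HJ.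
by apply: Jsum => s'; apply: JZ.
Qed.

End LA.

Section Misc.
Lemma In_of_mem (T : eqType) (x : T) (l : seq T) : x \in l -> List.In x l.
Proof.
elim: l => [//|y l IH]; rewrite in_cons => /orP [/eqP ->|H]; [by left| by right; apply: IH].
Qed.

Lemma coverXsp (R : realType) (I : Type) (T : finType) (x : T -> I -> R[i]) :
  (forall t, Xsp (x t)) -> exists sup : seq I, forall t i, x t i <> 0 -> List.In i sup.
Proof.
move=> H; have [l Hl] := functional_choice _ H.
exists (List.flat_map l (enum T)) => t i Hi; apply/List.in_flat_map.
exists t; split; [apply: In_of_mem; by rewrite mem_enum | exact: Hl].
Qed.
End Misc.

Section PK.
Variable R : realType.
Local Notation C := (R[i]).
Variable B : comAlgType C.
Variable m : B -> Prop.
Hypothesis mI : is_ideal m.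
Hypothesis sep : forall x, (forall k, mpow m k x) -> x = 0.
Variables (s : nat) (g : nat -> B).
Hypothesis gm : forall r, m (g r).
Hypothesis gspan : forall x, m x <-> exists a : nat -> B, x = \sum_(r < s) a r * g r.
Variable rho : B -> C.
Hypothesis rhoD : forall x y, rho (x + y) = rho x + rho y.
Hypothesis rhoM : forall x y, rho (x * y) = rho x * rho y.
Hypothesis rhoC : forall c : C, rho (c *: 1) = c.
Hypothesis rho_m : forall x, m x <-> rho x = 0.
Variable I : Type.
Variable N : (I -> B) -> Prop.
Hypothesis HN : is_Bsubmodule m N.
Hypothesis QF : quasi_flat m N.

Definition Prep k (d : I -> B) := exists q (c : 'I_q -> B) (z : 'I_q -> I -> B),
  (forall a, mpow m k (c a)) /\ (forall a, N (z a)) /\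
  forall i, mpow m k.+1 (d i - \sum_(a < q) c a * z a i).

Definition Pk k := forall d, N d -> (forall i, mpow m k (d i)) -> Prep k d.

Lemma unif (T : finType) k (d : T -> I -> B) : (forall t, Prep k (d t)) ->
  exists Q (c : T -> 'I_Q -> B) (z : T -> 'I_Q -> I -> B),
  (forall t a, mpow m k (c t a)) /\ (forall t a, N (z t a)) /\
  forall t i, mpow m k.+1 (d t i - \sum_(a < Q) c t a * z t a i).
Proof.
move=> H.
have H' : forall t, exists p : {q : nat & (('I_q -> B) * ('I_q -> I -> B))%type},
   (forall a, mpow m k ((projT2 p).1 a)) /\ (forall a, N ((projT2 p).2 a)) /\
   forall i, mpow m k.+1 (d t i - \sum_(a < projT1 p) (projT2 p).1 a * (projT2 p).2 a i).
  move=> t; have [q [c [z Hcz]]] := H t; by exists (existT _ q (c, z)).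
have [F HF] := functional_choice _ H'.
pose Q := \max_(t : T) projT1 (F t).
exists Q, (fun t (a : 'I_Q) => oapp (projT2 (F t)).1 0 (insub (a : nat))),
  (fun t (a : 'I_Q) => oapp (projT2 (F t)).2 (fun _ => 0) (insub (a : nat))).
split.
  move=> t a; case: (insub _) => [b|] /=; [by case: (HF t) => H1 _; apply: H1 | exact: mpow0].
split.
  move=> t a; case: (insub _) => [b|] /=; [by case: (HF t) => _ [H1 _]; apply: H1 | exact: (M0 HN)].
move=> t i; case: (HF t) => _ [_ H3].
have le : (projT1 (F t) <= Q)%N by apply: (leq_bigmax_cond t).
rewrite (sum_trunc (F := fun a => oapp (projT2 (F t)).1 0 (insub a) *
    oapp (projT2 (F t)).2 (fun _ => 0) (insub a) i) le).
  rewrite (eq_bigr (fun a => (projT2 (F t)).1 a * (projT2 (F t)).2 a i)); first exact: H3.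
  by move=> a _ /=; rewrite (valK a).
by move=> a le'; rewrite insubN /= ?mul0r // -leqNgt.
Qed.

Lemma swap_sum (T1 T2 : finType) (G : T1 -> B) (E : T2 -> T1 -> B) (Zf : T2 -> B) :
  \sum_(x : T1) G x * \sum_(y : T2) E y x * Zf y = \sum_(y : T2) (\sum_(x : T1) G x * E y x) * Zf y.
Proof.
under eq_bigr => x _ do rewrite mulr_sumr.
rewrite exchange_big /=; apply: eq_bigr => y _; rewrite mulr_suml.
by apply: eq_bigr => x _; rewrite mulrA.
Qed.

Lemma ZE (c : C) (x : B) : c *: x = x * (c *: 1).
Proof. by rewrite -scalerAr mulr1. Qed.

Lemma Key l : Pk l -> forall u : 'I_s -> I -> B, (forall r, N (u r)) ->
  (forall r i, mpow m l (u r i)) -> (forall i, mpow m l.+2 (\sum_(r < s) g r * u r i)) ->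
  exists u2 : 'I_s -> I -> B, (forall r, N (u2 r)) /\ (forall r i, mpow m l.+1 (u2 r i)) /\
  forall i, \sum_(r < s) g r * u2 r i = \sum_(r < s) g r * u r i.
Proof.
move=> Pl u Nu ul Hs.
have [Q [c [z [Hc [Hz Hd]]]]] := unif (fun r => Pl (u r) (Nu r) (ul r)).
pose v r i := u r i - \sum_(a < Q) c r a * z r a i.
have Nv : forall r, N (v r) by move=> r; apply: (MB HN) => //; apply: (M_lin HN) => a.
have vl : forall r i, mpow m l.+1 (v r i) by move=> r i; apply: Hd.
pose gam (p : ('I_s * 'I_Q)%type) := g p.1 * c p.1 p.2.
pose zz (p : ('I_s * 'I_Q)%type) := z p.1 p.2.
pose xx (p : ('I_s * 'I_Q)%type) := pi_red rho (zz p).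
have gamL : forall p, mpow m l.+1 (gam p) by move=> p; apply: mpow_mul.
have [sup Hsup] := coverXsp (T := ('I_s * 'I_Q)%type) (x := xx)
   (fun p => Xsp_pi rho_m mI (M_Bhat HN (Hz p.1 p.2))).
have E1 : forall i, \sum_(r < s) g r * u r i =
    \sum_(r < s) g r * v r i + \sum_(p : ('I_s * 'I_Q)%type) gam p * zz p i.
  move=> i; rewrite /gam /zz -(pair_bigA _ (fun (r : 'I_s) (a : 'I_Q) => g r * c r a * z r a i)) /=.
  rewrite -big_split /=; apply: eq_bigr => r _.
  rewrite /v mulrBr mulr_sumr (eq_bigr (fun a => g r * c r a * z r a i)) ?subrK //.
  by move=> a _; rewrite mulrA.
have HJ : forall i, mpow m l.+2 (\sum_(p : ('I_s * 'I_Q)%type) xx p i *: gam p).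
  move=> i.
  have -> : \sum_(p : ('I_s * 'I_Q)%type) xx p i *: gam p =
     \sum_(p : ('I_s * 'I_Q)%type) gam p * zz p i - \sum_(p : ('I_s * 'I_Q)%type) gam p * (zz p i - xx p i *: 1).
    by rewrite -sumrB; apply: eq_bigr => p _; rewrite mulrBr opprB addrC subrK ZE.
  apply: (mpowB mI).
    have H : mpow m l.+2 (\sum_(r < s) g r * u r i - \sum_(r < s) g r * v r i).
      apply: (mpowB mI); first exact: Hs.
      apply: mpow_sum => r; apply: mpow_mul; [exact: gm | exact: vl].
    by rewrite E1 addrC addKr in H.
  apply: mpow_sum => p; apply: mpow_mulr; first exact: gamL.
  exact: (m_sub_rho rhoD rhoC rho_m (zz p i)).
have [q [kap [w [wL [Hk He]]]]] :=
  LA (J := mpow m l.+2) (L := mpow m l.+1) (@mpow0 _ _ m l.+2) (@mpowD _ _ m l.+2)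
     (@mpowZ _ _ m mI l.+2) Hsup gamL HJ.
pose Z' t i := \sum_(p : ('I_s * 'I_Q)%type) kap t p *: zz p i.
have NZ' : forall t, N (Z' t).
  move=> t; apply: (M_sum HN) => p; apply: (MZ HN); exact: Hz.
have mZ' : forall t i, m (Z' t i).
  move=> t i; apply/rho_m; rewrite (rho_sum rhoD).
  rewrite (eq_bigr (fun p => kap t p * xx p i)); first exact: Hk.
  by move=> p _; rewrite (rhoZ rhoM rhoC).
have [e He'] := functional_choice _ (fun p => proj1 (mpowS_gen mI gm gspan l.+1 _) (He p)).
have [om Hom] := functional_choice _ (fun t => proj1 (mpowS_gen mI gm gspan l _) (wL t)).
exists (fun r i => v r i + \sum_(p : ('I_s * 'I_Q)%type) e p r * zz p i + \sum_(t < q) om t r * Z' t i).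
split.
  move=> r; apply: (MD HN); first apply: (MD HN) => //.
    by apply: (M_lin HN) => p; apply: Hz.
  by apply: (M_lin HN).
split.
  move=> r i; apply: mpowD; first apply: mpowD => //.
    apply: mpow_sum => p; rewrite mulrC; apply: (mpowM mI).
    by case: (He' p) => H _; apply: H.
  apply: mpow_sum => t; apply: mpow_mulr => //.
  by case: (Hom t) => H _; apply: H.
move=> i; rewrite E1.
under eq_bigr => r _ do rewrite 2!mulrDr.
rewrite !big_split /= -addrA; congr (_ + _).
rewrite swap_sum swap_sum.
have -> : \sum_(t < q) (\sum_(r < s) g r * om t r) * Z' t i =
    \sum_(t < q) w t * Z' t i.
  by apply: eq_bigr => t _; case: (Hom t) => _ <-.
have -> : \sum_(p : ('I_s * 'I_Q)%type) (\sum_(r < s) g r * e p r) * zz p i =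
    \sum_(p : ('I_s * 'I_Q)%type) (gam p - \sum_(t < q) kap t p *: w t) * zz p i.
  by apply: eq_bigr => p _; case: (He' p) => _ <-.
under [X in _ + X = _]eq_bigr => t _ do rewrite mulr_sumr.
rewrite exchange_big /= -big_split /=; apply: eq_bigr => p _.
rewrite mulrBl -addrA addrC -addrA [X in _ + X]addrC.
have -> : \sum_(t < q) w t * (kap t p *: zz p i) = (\sum_(t < q) kap t p *: w t) * zz p i.
  by rewrite mulr_suml; apply: eq_bigr => t _; rewrite -scalerAl scalerAr.
by rewrite addrCA addNr addr0.
Qed.

End PK.

Section PK2.
Variable R : realType.
Local Notation C := (R[i]).
Variable B : comAlgType C.
Variable m : B -> Prop.
Hypothesis mI : is_ideal m.
Hypothesis sep : forall x, (forall k, mpow m k x) -> x = 0.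
Variables (s : nat) (g : nat -> B).
Hypothesis gm : forall r, m (g r).
Hypothesis gspan : forall x, m x <-> exists a : nat -> B, x = \sum_(r < s) a r * g r.
Variable rho : B -> C.
Hypothesis rhoD : forall x y, rho (x + y) = rho x + rho y.
Hypothesis rhoM : forall x y, rho (x * y) = rho x * rho y.
Hypothesis rhoC : forall c : C, rho (c *: 1) = c.
Hypothesis rho_m : forall x, m x <-> rho x = 0.
Variable I : Type.
Variable N : (I -> B) -> Prop.
Hypothesis HN : is_Bsubmodule m N.
Hypothesis QF : quasi_flat m N.

Lemma P0 : Pk m N 0.
Proof.
move=> d Nd _; exists 1%N, (fun _ => 1), (fun _ => d); split=> //; split=> // i.
by rewrite big_ord1 mul1r subrr; apply: mpow0.
Qed.

Lemma Pstep k : (forall l, (l <= k)%N -> Pk m N l) -> Pk m N k.+1.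
Proof.
move=> HP d Nd dk.
have mXd : mX m d := conj (M_Bhat HN Nd) (fun i => mpow_m mI (dk i)).
have [b [y [kk [Hy [Hkk [Hinf Hconv]]]]]] := QF Nd mXd.
have [N0 HN0] := Hconv k.+2.
have bm : forall n, m (b n).
  move=> n; case: (Hkk n) => H1 H2; apply/(mpow1 mI); exact: (mpow_le H1 H2).
have [al Hal] := functional_choice _ (fun n => proj1 (gspan (b n)) (bm n)).
have U : forall l, (l <= k)%N -> exists u : 'I_s -> I -> B, (forall r, N (u r)) /\
    (forall r i, mpow m l (u r i)) /\ forall i, mpow m k.+2 (d i - \sum_(r < s) g r * u r i).
  elim=> [_|l IH lk].
    exists (fun (r : 'I_s) i => \sum_(n < N0) al n r * y n i); split.
      by move=> r; apply: (M_lin HN).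
    split=> // i.
    have E : \sum_(r < s) g r * (\sum_(n < N0) al n r * y n i) = \sum_(n < N0) b n * y n i.
      rewrite (swap_sum (fun r : 'I_s => g r) (fun (n : 'I_N0) (r : 'I_s) => al n r)
                     (fun n : 'I_N0 => y n i)).
      by apply: eq_bigr => n _; rewrite Hal; congr (_ * _); apply: eq_bigr => r _; rewrite mulrC.
    by rewrite E; apply: HN0.
  have [u [Nu [ul Hu]]] := IH (ltnW lk).
  have Hs : forall i, mpow m l.+2 (\sum_(r < s) g r * u r i).
    move=> i; have H : mpow m l.+2 (d i - (d i - \sum_(r < s) g r * u r i)).
      apply: (mpowB mI); first exact: (@mpow_le _ _ m l.+2 k.+1 (d i) lk (dk i)).
      apply: (mpow_le _ (Hu i)); by rewrite !ltnS; apply: ltnW.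
    by rewrite opprB addrC subrK in H.
  have [u2 [Nu2 [ul2 E2]]] := Key mI gm gspan rhoD rhoM rhoC rho_m HN (HP l (ltnW lk)) Nu ul Hs.
  by exists u2; split=> //; split=> // i; rewrite E2.
have [u [Nu [ul Hu]]] := U k (leqnn k).
have [Q [c [z [Hc [Hz Hd]]]]] := unif HN (fun r => HP k (leqnn k) (u r) (Nu r) (ul r)).
pose F i (p : ('I_s * 'I_Q)%type) := g p.1 * c p.1 p.2 * z p.1 p.2 i.
exists #|{: 'I_s * 'I_Q}|,
  (fun a : 'I_#|{: 'I_s * 'I_Q}| => g (enum_val a).1 * c (enum_val a).1 (enum_val a).2),
  (fun a : 'I_#|{: 'I_s * 'I_Q}| => z (enum_val a).1 (enum_val a).2).
split; first by move=> a; apply: mpow_mul.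
split; first by move=> a; apply: Hz.
move=> i.
have -> : \sum_(a < #|{: 'I_s * 'I_Q}|) g (enum_val a).1 * c (enum_val a).1 (enum_val a).2 *
    z (enum_val a).1 (enum_val a).2 i = \sum_(p : ('I_s * 'I_Q)%type) F i p.
  by rewrite -(big_enum_val (A := {: 'I_s * 'I_Q}) (F i)).
have -> : \sum_(p : ('I_s * 'I_Q)%type) F i p =
    \sum_(r < s) g r * u r i - \sum_(r < s) g r * (u r i - \sum_(a < Q) c r a * z r a i).
  rewrite -sumrB -(pair_bigA _ (fun (r : 'I_s) (a : 'I_Q) => F i (r, a))) /=.
  apply: eq_bigr => r _; rewrite mulrBr opprB addrC subrK mulr_sumr.
  by apply: eq_bigr => a _; rewrite /F mulrA.
set A := \sum_(r < s) g r * u r i.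
set X := \sum_(r < s) g r * (u r i - _).
have -> : d i - (A - X) = (d i - A) + X by ring.
apply: mpowD; first exact: Hu.
by apply: mpow_sum => r; apply: mpow_mul.
Qed.

Lemma Pall k : Pk m N k.
Proof.
have H : forall k l, (l <= k)%N -> Pk m N l.
  elim=> [l|k' IH l]; first by rewrite leqn0 => /eqP ->; apply: P0.
  rewrite leq_eqVlt => /orP [/eqP ->|lt]; last exact: IH.
  exact: Pstep.
exact: (H k).
Qed.

End PK2.

Section Bwd1.
Variable R : realType.
Local Notation C := (R[i]).
Variable B : comAlgType C.
Variable m : B -> Prop.
Hypothesis mI : is_ideal m.
Hypothesis sep : forall x, (forall k, mpow m k x) -> x = 0.
Variables (s : nat) (g : nat -> B).
Hypothesis gm : forall r, m (g r).
Hypothesis gspan : forall x, m x <-> exists a : nat -> B, x = \sum_(r < s) a r * g r.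
Variable rho : B -> C.
Hypothesis rhoD : forall x y, rho (x + y) = rho x + rho y.
Hypothesis rhoM : forall x y, rho (x * y) = rho x * rho y.
Hypothesis rhoC : forall c : C, rho (c *: 1) = c.
Hypothesis rho_m : forall x, m x <-> rho x = 0.
Variables (I : Type) (n : nat) (M : 'I_n -> (I -> B) -> Prop).
Hypothesis HM : forall j, is_Bsubmodule m (M j).
Hypothesis QFj : forall j, quasi_flat m (M j).
Hypothesis DX : is_direct_sum (@Xsp R I) (fun j => image_pi rho (M j)).

Lemma unifF (T : finType) (NN : T -> (I -> B) -> Prop) (HNN : forall t, is_Bsubmodule m (NN t))
  k (d : T -> I -> B) : (forall t, Prep m (NN t) k (d t)) ->
  exists Q (c : T -> 'I_Q -> B) (z : T -> 'I_Q -> I -> B),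
  (forall t a, mpow m k (c t a)) /\ (forall t a, NN t (z t a)) /\
  forall t i, mpow m k.+1 (d t i - \sum_(a < Q) c t a * z t a i).
Proof.
move=> H.
have H' : forall t, exists p : {q : nat & (('I_q -> B) * ('I_q -> I -> B))%type},
   (forall a, mpow m k ((projT2 p).1 a)) /\ (forall a, NN t ((projT2 p).2 a)) /\
   forall i, mpow m k.+1 (d t i - \sum_(a < projT1 p) (projT2 p).1 a * (projT2 p).2 a i).
  move=> t; have [q [c [z Hcz]]] := H t; by exists (existT _ q (c, z)).
have [F HF] := functional_choice _ H'.
pose Q := \max_(t : T) projT1 (F t).
exists Q, (fun t (a : 'I_Q) => oapp (projT2 (F t)).1 0 (insub (a : nat))),
  (fun t (a : 'I_Q) => oapp (projT2 (F t)).2 (fun _ => 0) (insub (a : nat))).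
split.
  move=> t a; case: (insub _) => [b|] /=; [by case: (HF t) => H1 _; apply: H1 | exact: mpow0].
split.
  move=> t a; case: (insub _) => [b|] /=; [by case: (HF t) => _ [H1 _]; apply: H1 | exact: (M0 (HNN t))].
move=> t i; case: (HF t) => _ [_ H3].
have le : (projT1 (F t) <= Q)%N by apply: (leq_bigmax_cond t).
rewrite (sum_trunc (F := fun a => oapp (projT2 (F t)).1 0 (insub a) *
    oapp (projT2 (F t)).2 (fun _ => 0) (insub a) i) le).
  rewrite (eq_bigr (fun a => (projT2 (F t)).1 a * (projT2 (F t)).2 a i)); first exact: H3.
  by move=> a _ /=; rewrite (valK a).
by move=> a le'; rewrite insubN /= ?mul0r // -leqNgt.
Qed.

Lemma DX_uniq (xa : 'I_n -> I -> C) : (forall j, image_pi rho (M j) (xa j)) ->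
  (forall i, \sum_(j < n) xa j i = 0) -> forall j, xa j = (fun _ => 0).
Proof.
move=> Hx Hs j; case: DX => _ [_ U].
apply: (U xa (fun _ _ => 0)).
  move=> j'; split=> //; exists (fun _ => 0); split; first exact: (M0 (HM j')).
  by apply: functional_extensionality => i; rewrite /pi_red (rho0 rhoD).
apply: functional_extensionality => i; rewrite Hs big1 //.
Qed.

Lemma bwd_uniq k : forall d : 'I_n -> I -> B, (forall j, M j (d j)) ->
  (forall i, \sum_(j < n) d j i = 0) -> forall j i, mpow m k (d j i).
Proof.
elim: k => [//|k IH] d Md Hsum.
have dk := IH d Md Hsum.
have [Q [c [z [Hc [Hz Hd]]]]] := unifF HM
  (fun j => Pall mI gm gspan rhoD rhoM rhoC rho_m (HM j) (@QFj j) (Md j) (dk j)).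
pose gam (p : ('I_n * 'I_Q)%type) := c p.1 p.2.
pose zz (p : ('I_n * 'I_Q)%type) := z p.1 p.2.
pose xx (p : ('I_n * 'I_Q)%type) := pi_red rho (zz p).
have [sup Hsup] := coverXsp (T := ('I_n * 'I_Q)%type) (x := xx)
   (fun p => Xsp_pi rho_m mI (M_Bhat (HM p.1) (Hz p.1 p.2))).
have gamL : forall p, mpow m k (gam p) by move=> p; apply: Hc.
have HJ : forall i, mpow m k.+1 (\sum_(p : ('I_n * 'I_Q)%type) xx p i *: gam p).
  move=> i.
  have -> : \sum_(p : ('I_n * 'I_Q)%type) xx p i *: gam p =
     \sum_(p : ('I_n * 'I_Q)%type) gam p * zz p i -
     \sum_(p : ('I_n * 'I_Q)%type) gam p * (zz p i - xx p i *: 1).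
    by rewrite -sumrB; apply: eq_bigr => p _; rewrite mulrBr opprB addrC subrK ZE.
  apply: (mpowB mI).
    have H : mpow m k.+1 (\sum_(j < n) d j i -
        \sum_(j < n) (d j i - \sum_(a < Q) c j a * z j a i)).
      rewrite Hsum; apply: (mpowB mI); first exact: mpow0.
      by apply: mpow_sum => j; apply: Hd.
    have E : \sum_(p : ('I_n * 'I_Q)%type) gam p * zz p i = \sum_(j < n) d j i -
        \sum_(j < n) (d j i - \sum_(a < Q) c j a * z j a i).
      rewrite -sumrB -(pair_bigA _ (fun (j : 'I_n) (a : 'I_Q) => c j a * z j a i)) /=.
      by apply: eq_bigr => j _; rewrite opprB addrCA subrr addr0.
    by rewrite E.
  apply: mpow_sum => p; apply: mpow_mulr; first exact: gamL.
  exact: (m_sub_rho rhoD rhoC rho_m (zz p i)).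
have [q [kap [w [wL [Hk He]]]]] :=
  LA (J := mpow m k.+1) (L := mpow m k) (@mpow0 _ _ m k.+1) (@mpowD _ _ m k.+1)
     (@mpowZ _ _ m mI k.+1) Hsup gamL HJ.
have X0 : forall t j i, \sum_(a < Q) kap t (j, a) * xx (j, a) i = 0.
  move=> t j i.
  have := DX_uniq (xa := fun j i => \sum_(a < Q) kap t (j, a) * xx (j, a) i) _ _ j.
  move=> /(_ _ _) H.
  suff E : (fun i => \sum_(a < Q) kap t (j, a) * xx (j, a) i) = (fun _ => 0).
    by have := f_equal (fun f => f i) E.
  apply: H.
    move=> j'; exists (fun i => \sum_(a < Q) kap t (j', a) *: z j' a i); split.
      by apply: (M_sum (HM j')) => a; apply: (MZ (HM j')).
    apply: functional_extensionality => i'; rewrite /pi_red (rho_sum rhoD).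
    by apply: eq_bigr => a _; rewrite (rhoZ rhoM rhoC).
  move=> i'; rewrite (pair_bigA _ (fun (j : 'I_n) (a : 'I_Q) => kap t (j, a) * xx (j, a) i')).
  rewrite (eq_bigr (fun p => kap t p * xx p i')); first exact: Hk.
  by move=> -[j' a] _.
move=> j i.
set S := \sum_(a < Q) c j a * z j a i.
have e1 : \sum_(a < Q) c j a * (z j a i - xx (j, a) i *: 1) = S - \sum_(a < Q) xx (j, a) i *: c j a.
  by rewrite -sumrB; apply: eq_bigr => a _; rewrite mulrBr -ZE.
set Y := \sum_(a < Q) xx (j, a) i *: \sum_(t < q) kap t (j, a) *: w t.
have e2 : \sum_(a < Q) xx (j, a) i *: (c j a - \sum_(t < q) kap t (j, a) *: w t) =
    \sum_(a < Q) xx (j, a) i *: c j a - Y.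
  by rewrite -sumrB; apply: eq_bigr => a _; rewrite scalerBr.
have e3 : Y = 0.
  rewrite /Y (eq_bigr (fun a => \sum_(t < q) (kap t (j, a) * xx (j, a) i) *: w t)).
    rewrite exchange_big /= big1 // => t _; rewrite -scaler_suml.
    by rewrite (X0 t j i) scale0r.
  move=> a _; rewrite scaler_sumr; apply: eq_bigr => t _; by rewrite scalerA mulrC.
have -> : d j i = (d j i - S) + \sum_(a < Q) c j a * (z j a i - xx (j, a) i *: 1) +
    \sum_(a < Q) xx (j, a) i *: (c j a - \sum_(t < q) kap t (j, a) *: w t).
  rewrite e1 e2 e3; set T := \sum_(a < Q) _; by ring.
apply: mpowD; first apply: mpowD.
- exact: Hd.
- apply: mpow_sum => a; apply: mpow_mulr; first exact: Hc.
  exact: (m_sub_rho rhoD rhoC rho_m (z j a i)).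
- apply: mpow_sum => a; apply: (mpowZ mI); exact: (He (j, a)).
Qed.

End Bwd1.

Section Ex.
Variable R : realType.
Local Notation C := (R[i]).
Variable B : comAlgType C.
Variable m : B -> Prop.
Hypothesis mI : is_ideal m.
Hypothesis sep : forall x, (forall k, mpow m k x) -> x = 0.
Variables (s : nat) (g : nat -> B).
Hypothesis gm : forall r, m (g r).
Hypothesis gspan : forall x, m x <-> exists a : nat -> B, x = \sum_(r < s) a r * g r.
Variable rho : B -> C.
Hypothesis rhoD : forall x y, rho (x + y) = rho x + rho y.
Hypothesis rhoM : forall x y, rho (x * y) = rho x * rho y.
Hypothesis rhoC : forall c : C, rho (c *: 1) = c.
Hypothesis rho_m : forall x, m x <-> rho x = 0.
Variables (I : Type) (n : nat) (M : 'I_n -> (I -> B) -> Prop).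
Hypothesis HM : forall j, is_Bsubmodule m (M j).
Hypothesis spos : (0 < s)%N.
Hypothesis comp : forall u : nat -> B, (forall n, mpow m n (u n.+1 - u n)) ->
     exists x, forall n, mpow m n (x - u n).
Hypothesis PC : forall j, pseudoclosed m (M j).
Hypothesis DX : is_direct_sum (@Xsp R I) (fun j => image_pi rho (M j)).

Lemma Dstep h : BhatX m h -> exists (w : 'I_n -> I -> B) (h' : nat -> I -> B),
  (forall j, M j (w j)) /\ (forall r, BhatX m (h' r)) /\
  forall i, h i = \sum_(j < n) w j i + \sum_(r < s) g r * h' r i.
Proof.
move=> Hh.
have [xs [Hxs Exs]] : exists xs : 'I_n -> I -> C, (forall j, image_pi rho (M j) (xs j)) /\
    pi_red rho h = (fun i => \sum_(j < n) xs j i).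
  by case: DX => _ [H _]; apply: H; apply: (Xsp_pi rho_m mI).
have [W HW] := functional_choice _ Hxs.
pose e i := h i - \sum_(j < n) W j i.
have eB : BhatX m e.
  apply: (BhatXB mI) => //; apply: BhatX_sum => j.
  by case: (HW j) => H _; exact: (M_Bhat (HM j) H).
have e1 : forall i, mpow m 1 (e i).
  move=> i; apply/(mpow1 mI)/rho_m; rewrite /e (rhoB rhoD) (rho_sum rhoD).
  have := f_equal (fun F => F i) Exs; rewrite /pi_red /= => ->.
  apply/eqP; rewrite subr_eq0; apply/eqP.
  by apply: eq_bigr => j _; case: (HW j) => _ ->.
have [h' [h'B [_ Eh']]] := A1 (k := 0) mI sep gm gspan eB e1.
exists W, h'; split; first by move=> j; case: (HW j).
split=> // i; by rewrite -Eh' /e addrC subrK.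
Qed.

Fixpoint Tn (K : nat) : nat := if K is K'.+1 then (Tn K' * s + 1)%N else 0%N.

Section Heap.
Variable D : (I -> B) -> ('I_n -> I -> B) * (nat -> I -> B).
Hypothesis HD : forall h, BhatX m h ->
  (forall j, M j ((D h).1 j)) /\ (forall r, BhatX m ((D h).2 r)) /\
  forall i, h i = \sum_(j < n) (D h).1 j i + \sum_(r < s) g r * (D h).2 r i.
Variable f : I -> B.
Hypothesis fB : BhatX m f.

Fixpoint nodef (F c : nat) : B * (I -> B) * nat :=
  match F with
  | 0 => (1, f, 0%N)
  | F'.+1 => match c with
             | 0 => (1, f, 0%N)
             | c'.+1 => let t := nodef F' ((c' %/ s)%N) in
                        (t.1.1 * g ((c' %% s)%N), (D t.1.2).2 ((c' %% s)%N), t.2.+1)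
             end
  end.

Lemma nodef_stable F : forall F' c, (c <= F)%N -> (c <= F')%N -> nodef F c = nodef F' c.
Proof.
elim: F => [|F IH] F' c.
  by rewrite leqn0 => /eqP -> _; case: F'.
case: c => [|c'] cF cF'; first by case: F' cF'.
case: F' cF' => [//|F''] cF' /=.
rewrite (IH F'') //; apply: leq_trans (leq_div _ _) _; by [].
Qed.

Definition node c := nodef c c.
Definition G c := (node c).1.1.
Definition H c := (node c).1.2.
Definition lev c := (node c).2.

Lemma node0 : node 0 = (1, f, 0%N). Proof. by []. Qed.
Lemma nodeS c' : node c'.+1 =
  ((node ((c' %/ s)%N)).1.1 * g ((c' %% s)%N), (D (node ((c' %/ s)%N)).1.2).2 ((c' %% s)%N), (node ((c' %/ s)%N)).2.+1).
Proof.
rewrite /node /= (nodef_stable (F := c') (F' := (c' %/ s)%N)) //; exact: leq_div.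
Qed.

Lemma HB c : BhatX m (H c).
Proof.
elim/ltn_ind: c => -[|c'] IH; first by rewrite /H node0.
have Hp : BhatX m (H (c' %/ s)%N) by apply: IH; rewrite ltnS leq_div.
rewrite /H nodeS /=; case: (HD Hp) => _ [H2 _]; exact: H2.
Qed.

Lemma Glev c : mpow m (lev c) (G c).
Proof.
elim/ltn_ind: c => -[|c'] IH; first by rewrite /G /lev node0.
rewrite /G /lev nodeS /=; apply: mpow_mulr => //.
by apply: IH; rewrite ltnS leq_div.
Qed.

Lemma levT K c : (Tn K <= c)%N -> (K <= lev c)%N.
Proof.
elim: K c => [//|K IH] [|c'] /=; first by rewrite addn1.
move=> le; have le' : (Tn K * s <= c')%N by move: le; rewrite addn1.
rewrite /lev nodeS /= ?ltnS; apply: IH.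
by rewrite leq_divRL.
Qed.

Lemma GT K c : (Tn K <= c)%N -> mpow m K (G c).
Proof. by move=> le; apply: (mpow_le (levT le)); apply: Glev. Qed.

Lemma TS K : (Tn K <= Tn K.+1)%N.
Proof. by rewrite /= addn1; apply: leqW; rewrite leq_pmulr. Qed.

Definition Wn c := (D (H c)).1.

Lemma Wn_M c j : M j (Wn c j).
Proof. by case: (HD (HB c)) => H1 _; apply: H1. Qed.

Lemma node_id c i : G c * H c i = G c * \sum_(j < n) Wn c j i +
   \sum_(r < s) G (c * s + r)%N.+1 * H (c * s + r)%N.+1 i.
Proof.
case: (HD (HB c)) => _ [_ E]; rewrite {1}E mulrDr; congr (_ + _).
rewrite mulr_sumr; apply: eq_bigr => r _.
have d1 : ((c * s + r) %/ s = c)%N by rewrite divnMDl // divn_small // addn0.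
have d2 : ((c * s + r) %% s = r)%N by rewrite modnMDl modn_small.
by rewrite /G /H nodeS /= d1 d2 mulrA.
Qed.

Lemma mpow_sum_nat k a b (F : nat -> B) : (forall c, (a <= c)%N -> (c < b)%N -> mpow m k (F c)) ->
  mpow m k (\sum_(a <= c < b) F c).
Proof.
move=> HF; rewrite big_nat_cond; apply: big_ind => //; [exact: mpow0 | exact: mpowD |].
by move=> c /andP [/andP [H1 H2] _]; apply: HF.
Qed.

Lemma telescope N i : f i = \sum_(0 <= c < N) G c * \sum_(j < n) Wn c j i +
   \sum_(N <= c < (N * s + 1)%N) G c * H c i.
Proof.
elim: N => [|N IH].
  by rewrite big_geq // mul0n add0n big_nat1 add0r /G /H node0 /= mul1r.
rewrite IH big_nat_recr //= -addrA; congr (_ + _).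
have le1 : (N < N * s + 1)%N by rewrite addn1 ltnS leq_pmulr.
rewrite big_ltn // node_id -!addrA; congr (_ + _).
have le2 : (N.+1 <= N * s + 1)%N by rewrite addn1 ltnS leq_pmulr.
have le3 : (N * s + 1 <= N.+1 * s + 1)%N by rewrite leq_add2r leq_mul2r leqnSn orbT.
rewrite addrC (big_cat_nat le2 le3) /=; congr (_ + _).
rewrite -{1}(add0n (N * s + 1)%N) big_addn mulSnr.
have -> : (N * s + s + 1 - (N * s + 1) = s)%N by rewrite addnAC addKn.
rewrite big_mkord; apply: eq_bigr => r _.
by have -> : (r + (N * s + 1) = (N * s + r).+1)%N by rewrite addn1 addnS addnC.
Qed.

Lemma remainder K N i : (Tn K <= N)%N -> mpow m K (\sum_(N <= c < (N * s + 1)%N) G c * H c i).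
Proof.
move=> le; apply: mpow_sum_nat => c Nc _; rewrite mulrC; apply: (mpowM mI).
by apply: GT; apply: leq_trans Nc.
Qed.

Definition Sj j N i := \sum_(0 <= c < N) G c * Wn c j i.

Lemma Sj_diff j K N i : (Tn K <= N)%N -> mpow m K (Sj j N i - Sj j (Tn K) i).
Proof.
move=> le; rewrite /Sj (big_cat_nat (leq0n _) le) /= addrAC subrr add0r.
apply: mpow_sum_nat => c Tc _; rewrite mulrC; apply: (mpowM mI); exact: GT.
Qed.

Lemma heap_decomp : exists w : 'I_n -> I -> B, (forall j, M j (w j)) /\
  f = (fun i => \sum_(j < n) w j i).
Proof.
have Hv : forall j, exists v : I -> B, forall i K, mpow m K (v i - Sj j (Tn K) i).
  move=> j.
  have Hi : forall i, exists x : B, forall K, mpow m K (x - Sj j (Tn K) i).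
    move=> i; apply: (comp (u := fun K => Sj j (Tn K) i)) => K.
    exact: (Sj_diff j i (TS K)).
  have [v Hv] := functional_choice _ Hi.
  by exists v => i K; apply: Hv.
have [v Hv'] := functional_choice _ Hv.
have vM : forall j, M j (v j).
  move=> j; apply: PC; exists G, (fun c => Wn c j), lev; split; first by move=> c; apply: Wn_M.
  split; first by move=> c; split; [exact: leq0n | exact: Glev].
  split; first by move=> K; exists (Tn K) => c; apply: levT.
  move=> K; exists (Tn K) => N' le i.
  have H0 := mpowB mI (Hv' j i K) (Sj_diff j i le).
  rewrite opprB addrA subrK /Sj big_mkord in H0; exact: H0.
exists v; split=> //.
apply: functional_extensionality => i; apply/eqP; rewrite -subr_eq0; apply/eqP.
apply: sep => K.
have E := telescope (Tn K) i.
have -> : f i - \sum_(j < n) v j i = \sum_(Tn K <= c < (Tn K * s + 1)%N) G c * H c i -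
    \sum_(j < n) (v j i - Sj j (Tn K) i).
  rewrite E sumrB /Sj.
  have -> : \sum_(0 <= c < Tn K) G c * \sum_(j < n) Wn c j i =
      \sum_(j < n) \sum_(0 <= c < Tn K) G c * Wn c j i.
    rewrite exchange_big /=; apply: eq_bigr => c _; by rewrite mulr_sumr.
  set A := \sum_(j < n) \sum_(0 <= c < Tn K) _.
  set Rm := \sum_(Tn K <= c < _) _.
  set V := \sum_(j < n) v j i.
  by ring.
apply: (mpowB mI); first exact: remainder.
by apply: mpow_sum => j; apply: Hv'.
Qed.

End Heap.

End Ex.

Unset Implicit Arguments.
Theorem proposition2p29 (R : realType) (B : comAlgType (R[i]))
  (m : B -> Prop) (rho : B -> R[i]) (I : Type) (n : nat)
  (M : 'I_n -> (I -> B) -> Prop) :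
  deformation_base m rho ->
  (forall j, is_Bsubmodule m (M j)) ->
  (is_direct_sum (BhatX m) M <->
   ((forall j, pseudoclosed m (M j) /\ quasi_flat m (M j)) /\
    is_direct_sum (@Xsp R I) (fun j => image_pi rho (M j)))).
Proof.
move=> [mmax [_ [noeth [[sep comp] [rhoD [rhoM [rhoC rho_m]]]]]]] HM.
have mI : is_ideal m by case: mmax.
have [s [g [spos [gm gspan]]]] := gens_exist mI noeth.
split.
- move=> DS; split; last exact: (fwd_X mI sep gm gspan rhoD rhoC rho_m HM DS).
  move=> j; split.
  + exact: (fwd_pseudoclosed mI sep gm gspan HM DS).
  + exact: (fwd_quasi_flat mI sep gm gspan HM DS).
- move=> [Hpq DX]; split; [|split].
  + by move=> j f Mf; exact: (M_Bhat (HM j) Mf).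
  + move=> f fB.
    have HD0 : forall h, exists p : ('I_n -> I -> B) * (nat -> I -> B), BhatX m h ->
        (forall j, M j (p.1 j)) /\ (forall r, BhatX m (p.2 r)) /\
        forall i, h i = \sum_(j < n) p.1 j i + \sum_(r < s) g r * p.2 r i.
      move=> h; case: (classic (BhatX m h)) => hB.
        have [w [h' Hwh]] := Dstep mI sep gm gspan rhoD rho_m HM DX hB.
        by exists (w, h').
      by exists ((fun _ _ => 0), (fun _ _ => 0)).
    have [D HD] := functional_choice _ HD0.
    exact: (heap_decomp mI sep gm spos comp (fun j => proj1 (Hpq j)) (D := D) HD fB).
  + move=> w w' Hww E j.
    pose d := fun j i => w j i - w' j i.
    have Md : forall j, M j (d j).
      by move=> j'; case: (Hww j') => H1 H2; apply: (MB (HM j')).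
    have Sd : forall i, \sum_(j < n) d j i = 0.
      move=> i; rewrite /d sumrB; have := f_equal (fun F => F i) E => /= ->.
      by rewrite subrr.
    have := sep_fun sep (fun k i => bwd_uniq mI gm gspan rhoD rhoM rhoC rho_m HM
       (fun j => proj2 (Hpq j)) DX k Md Sd j i).
    move=> H0; apply: functional_extensionality => i.
    have := f_equal (fun F => F i) H0; rewrite /d /= => /eqP.
    by rewrite subr_eq0 => /eqP.
Qed.
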